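(* Let $P\subset\mathbb{R}^d$ be a full-dimensional lattice polytope with codegree $a$. If $P$ is nearly Gorenstein, then $P=\lfloor aP\rfloor+\{P\}$ (Minkowski sum).
   Context: $\mathbf{k}$ is an infinite field. $P$ has facet presentation $P=\{x: n_F(x)\ge -h_F\ \forall \text{ facets } F\}$ with $n_F\in(\mathbb{Z}^d)^*$ primitive inner normals and $h_F\in\mathbb{Z}$. The codegree is $a=\min\{k\in\mathbb{Z}_{\ge1}: \mathrm{int}(kP)\cap\mathbb{Z}^d\ne\varnothing\}$. For a lattice polytope $Q$, $\lfloor Q\rfloor=\mathrm{conv}(\mathrm{int}(Q)\cap\mathbb{Z}^d)$ (floor polytope). The remainder polytope is $\{P\}=\mathrm{conv}\{x\in\mathbb{Z}^d: n_F(x)\ge (a-1)h_F-1\ \forall F\}$. The Minkowski sum is $A+B=\{x+y: x\in A, y\in B\}$. $P$ is nearly Gorenstein if its Ehrhart ring $A(P)=\mathbf{k}[\mathbf{t}^xs^k: k\in\mathbb{N}, x\in kP\cap\mathbb{Z}^d]$ (graded by $k$, graded maximal ideal $\mathbf{m}$, canonical module $\omega$) satisfies $\mathbf{m}\subseteq \mathrm{tr}(\omega)=\sum_{\phi\in\mathrm{Hom}(\omega,A(P))}\phi(\omega)$. *)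

(* Defs.v *)
From HB Require Import structures.
From mathcomp Require Import all_boot all_order all_algebra.
From mathcomp Require Import reals.
From mathcomp.multinomials Require Import freeg.
Set Implicit Arguments. Unset Strict Implicit. Unset Printing Implicit Defensive.
Import Order.TTheory GRing.Theory Num.Theory.
Local Open Scope ring_scope.

Section Geometry.
Variables (R : realType) (d : nat).
Local Notation pt := 'rV[R]_d.

Definition lat (z : 'rV[int]_d) : pt := map_mx (fun n : int => n%:~R) z.

Definition conv (S : pt -> Prop) (x : pt) : Prop :=
  exists (n : nat) (p : 'I_n -> pt) (l : 'I_n -> R),
    (forall i, S (p i)) /\ (forall i, 0 <= l i) /\
    \sum_(i < n) l i = 1 /\ x = \sum_(i < n) l i *: p i.

Definition dil (c : R) (S : pt -> Prop) (y : pt) : Prop :=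
  exists x, S x /\ y = c *: x.

(* topological interior in R^d (sup-norm balls, same topology) *)
Definition interior (S : pt -> Prop) (x : pt) : Prop :=
  exists e : R, 0 < e /\
    forall y : pt, (forall i, `|y 0 i - x 0 i| < e) -> S y.

Definition mink (A B : pt -> Prop) (z : pt) : Prop :=
  exists x y, A x /\ B y /\ z = x + y.

Definition lattice_polytope (P : pt -> Prop) : Prop :=
  exists V : seq 'rV[int]_d,
    forall x, P x <-> conv (fun y => exists2 v, v \in V & y = lat v) x.

Definition full_dimensional (P : pt -> Prop) : Prop := exists x, interior P x.

Definition floor_poly (Q : pt -> Prop) : pt -> Prop :=
  conv (fun y => exists z, interior Q (lat z) /\ y = lat z).

Definition lin (n : 'rV[int]_d) (x : pt) : R := \sum_(i < d) (n 0 i)%:~R * x 0 i.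

Definition primitive (n : 'rV[int]_d) : Prop :=
  forall (c : int) (m : 'rV[int]_d), n = c *: m -> `|c| = 1.

(* Fs is the facet presentation of P: P = {x : n_F(x) >= -h_F}, normals
   primitive, and every inequality irredundant (so each defines a facet). *)
Definition facet_presentation (P : pt -> Prop)
    (Fs : seq ('rV[int]_d * int)) : Prop :=
  (forall x, P x <-> (forall F, F \in Fs -> lin F.1 x >= - (F.2%:~R))) /\
  (forall F, F \in Fs -> primitive F.1) /\
  (forall F, F \in Fs -> exists x,
       lin F.1 x < - (F.2%:~R) /\
       (forall G, G \in Fs -> G != F -> lin G.1 x >= - (G.2%:~R))).

Definition is_codegree (P : pt -> Prop) (a : nat) : Prop :=
  (1 <= a)%N /\ (exists z, interior (dil a%:R P) (lat z)) /\
  (forall k : nat, (1 <= k < a)%N -> ~ exists z, interior (dil k%:R P) (lat z)).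

Definition remainder_poly (Fs : seq ('rV[int]_d * int)) (a : nat) : pt -> Prop :=
  conv (fun y => exists z, y = lat z /\
     forall F, F \in Fs -> lin F.1 (lat z) >= ((a%:Z - 1) * F.2 - 1)%:~R).

End Geometry.

(* Algebraic side: the Laurent polynomial ring k[t_1^±,...,t_d^±, s^±]   *)
(* as the group algebra of Z^d x Z, realised as the free k-module on     *)
(* keys (x, j) (standing for t^x s^j), with multiplication extended      *)
(* bilinearly from t^x s^j * t^y s^l = t^(x+y) s^(j+l).                  *)
Section Ehrhart.
Variables (k : fieldType) (d : nat).

Definition key := ('rV[int]_d * int)%type.
Definition laurent := {freeg key / k}.

Definition lmul (f g : laurent) : laurent :=
  fglift (fun a : key =>
            fglift (fun b : key => << (a.1 + b.1, a.2 + b.2) >> : laurent) g) f.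

Variable (R : realType).
Variable (P : 'rV[R]_d -> Prop).

Definition in_ehrhart (f : laurent) : Prop :=
  forall e : key, e \in dom f -> 0 <= e.2 /\ dil (e.2%:~R) P (lat R e.1).

Definition in_maxideal (f : laurent) : Prop :=
  in_ehrhart f /\ forall e : key, e \in dom f -> 0 < e.2.

(* canonical module ω of A(P) (Danilov–Stanley):
   span{ t^x s^j : j >= 1, x in int(jP) ∩ Z^d }, an ideal of A(P) *)
Definition in_canonical (f : laurent) : Prop :=
  forall e : key, e \in dom f -> 0 < e.2 /\ interior (dil (e.2%:~R) P) (lat R e.1).

Definition is_hom_canonical (phi : laurent -> laurent) : Prop :=
  (forall w, in_canonical w -> in_ehrhart (phi w)) /\
  (forall w1 w2, in_canonical w1 -> in_canonical w2 ->
      phi (w1 + w2) = phi w1 + phi w2) /\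
  (forall r w, in_ehrhart r -> in_canonical w ->
      phi (lmul r w) = lmul r (phi w)).

Definition in_trace (f : laurent) : Prop :=
  exists (n : nat) (phi : 'I_n -> laurent -> laurent) (w : 'I_n -> laurent),
    (forall i, is_hom_canonical (phi i) /\ in_canonical (w i)) /\
    f = \sum_(i < n) phi i (w i).

Definition nearly_gorenstein : Prop :=
  forall f, in_maxideal f -> in_trace f.

End Ehrhart.

Definition infinite_field (k : fieldType) : Prop :=
  forall s : seq k, exists x : k, x \notin s.

(* Main.v *)
Require Import Defs.
From HB Require Import structures.
From mathcomp Require Import all_boot all_order all_algebra.
From mathcomp Require Import reals.
From mathcomp.multinomials Require Import freeg.
From mathcomp Require Import zify ring lra.
Set Implicit Arguments. Unset Strict Implicit. Unset Printing Implicit Defensive.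
Import Order.TTheory GRing.Theory Num.Theory.
Local Open Scope ring_scope.

Section Geo.
Variables (R : realType) (d : nat).
Local Notation pt := 'rV[R]_d.

Definition ilin (n v : 'rV[int]_d) : int := \sum_(i < d) n 0 i * v 0 i.

Lemma lin_lat n v : lin n (lat R v) = (ilin n v)%:~R.
Proof.
rewrite /lin /ilin rmorph_sum; apply: eq_bigr => i _.
by rewrite /lat mxE rmorphM.
Qed.

Lemma ilinD n u v : ilin n (u + v) = ilin n u + ilin n v.
Proof. by rewrite /ilin -big_split; apply: eq_bigr => i _; rewrite mxE mulrDr. Qed.

Lemma ilinZ n c v : ilin n (c *: v) = c * ilin n v.
Proof. by rewrite /ilin mulr_sumr; apply: eq_bigr => i _; rewrite mxE mulrCA. Qed.

Lemma ilinN n v : ilin n (- v) = - ilin n v.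
Proof. by rewrite -scaleN1r ilinZ mulN1r. Qed.

Lemma ilin0 n : ilin n 0 = 0.
Proof. by rewrite /ilin big1 // => i _; rewrite mxE mulr0. Qed.

Lemma ilin_sum n (I : finType) (Q : pred I) (F : I -> 'rV[int]_d) :
  ilin n (\sum_(i | Q i) F i) = \sum_(i | Q i) ilin n (F i).
Proof. exact: (big_morph (ilin n) (ilinD n) (ilin0 n)). Qed.

Lemma linD n (x y : pt) : lin n (x + y) = lin n x + lin n y.
Proof. by rewrite /lin -big_split; apply: eq_bigr => i _; rewrite mxE mulrDr. Qed.

Lemma linZ n c (x : pt) : lin n (c *: x) = c * lin n x.
Proof. by rewrite /lin mulr_sumr; apply: eq_bigr => i _; rewrite mxE mulrCA. Qed.

Lemma lin_sum n m (l : 'I_m -> R) (p : 'I_m -> pt) :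
  lin n (\sum_(i < m) l i *: p i) = \sum_(i < m) l i * lin n (p i).
Proof.
rewrite /lin; under eq_bigr do rewrite summxE mulr_sumr.
rewrite exchange_big; apply: eq_bigr => i _ /=.
rewrite mulr_sumr; apply: eq_bigr => j _; rewrite mxE mulrCA //.
Qed.

Lemma latD (u v : 'rV[int]_d) : lat R (u + v) = lat R u + lat R v.
Proof. by apply/matrixP => i j; rewrite !mxE rmorphD. Qed.

Lemma conv_lb (S : pt -> Prop) n c x : conv S x ->
  (forall p, S p -> c <= lin n p) -> c <= lin n x.
Proof.
case=> m [p [l [Sp [l0 [l1 ->]]]]] H; rewrite lin_sum.
apply: (@le_trans _ _ (\sum_(i < m) l i * c)).
  by rewrite -mulr_suml l1 mul1r.
by apply: ler_sum => i _; apply: ler_wpM2l => //; apply: H.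
Qed.

Lemma sum_seq_ge (T : eqType) (V : numDomainType) (s : seq T) (f : T -> V) x :
  (forall y, 0 <= f y) -> x \in s -> f x <= \sum_(y <- s) f y.
Proof.
move=> f0; elim: s => // a s IH; rewrite in_cons big_cons => /orP[/eqP->|xs].
  by rewrite lerDl sumr_ge0.
by rewrite (le_trans (IH xs)) // lerDr.
Qed.

Lemma nz_exists (n : 'rV[int]_d) : n != 0 -> exists i, n 0 i != 0.
Proof.
move=> nz; apply/existsP; apply: contraR nz => /existsPn H.
by apply/eqP/matrixP => i j; rewrite ord1 mxE; apply/eqP; move: (H j); rewrite negbK.
Qed.

Lemma interior_strict (S : pt -> Prop) n c x : n != 0 ->
  (forall y, S y -> c <= lin n y) -> interior S x -> c < lin n x.
Proof.
move=> nz H [e [e0 He]].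
set sg := \row_i (Num.sg ((n 0 i)%:~R : R)).
have Sy : S (x - (e / 2) *: sg).
  apply: He => i; rewrite !mxE addrAC subrr add0r normrN normrM.
  apply: (@le_lt_trans _ _ (`|e/2| * 1)).
    by apply: ler_wpM2l => //; rewrite normr_sg; case: (_ != 0).
  rewrite mulr1 ger0_norm; lra.
have := H _ Sy; rewrite linD -scaleN1r linZ linZ.
have -> : lin n sg = \sum_i `|(n 0 i)%:~R : R|.
  by rewrite /lin; apply: eq_bigr => i _; rewrite mxE normrEsg mulrC.
have [i ni] := nz_exists nz.
have pos : 0 < \sum_i `|(n 0 i)%:~R : R|.
  rewrite (bigD1 i) //= ltr_pwDl ?sumr_ge0 // normr_gt0 intr_eq0 //.
move=> h; apply: (le_lt_trans h).
rewrite mulN1r; have : 0 < e / 2 * \sum_i `|(n 0 i)%:~R : R| by rewrite mulr_gt0 // divr_gt0.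
lra.
Qed.

Lemma prim_nz (n : 'rV[int]_d) : primitive n -> n != 0.
Proof.
move=> H; apply/eqP => n0; have := H 2 n; rewrite {2}n0 scaler0 => /(_ n0).
by [].
Qed.

End Geo.
Section Poly.
Variables (R : realType) (d : nat).
Local Notation pt := 'rV[R]_d.
Variables (P : pt -> Prop) (Fs : seq ('rV[int]_d * int)).
Hypothesis HP : forall x, P x <-> (forall F, F \in Fs -> lin F.1 x >= - (F.2%:~R)).
Hypothesis Hprim : forall F, F \in Fs -> primitive F.1.

Lemma dil_lb t y F : 0 <= t -> dil t P y -> F \in Fs -> - (t * F.2%:~R) <= lin F.1 y.
Proof.
move=> t0 [x [Px ->]] HF; rewrite linZ -mulrN.
by apply: ler_wpM2l => //; apply: (proj1 (HP x)).
Qed.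

Lemma int_lb (t : int) z F : 0 <= t -> interior (dil t%:~R P) (lat R z) ->
  F \in Fs -> - (t * F.2) + 1 <= ilin F.1 z.
Proof.
move=> t0 Hi HF.
have t0' : (0 : R) <= t%:~R by rewrite ler0z.
have := @interior_strict _ _ (dil t%:~R P) _ _ _ (prim_nz (Hprim HF)) (fun y Hy => dil_lb t0' Hy HF) Hi.
rewrite lin_lat -rmorphM -rmorphN ltr_int => h; lia.
Qed.

Lemma interior_of_lb (t : int) y : 0 < t ->
  (forall F, F \in Fs -> - (t * F.2) + 1 <= ilin F.1 y) ->
  interior (dil t%:~R P) (lat R y).
Proof.
move=> t0 H.
set S := \sum_(F <- Fs) \sum_i `|(F.1 0 i)%:~R : R|.
have S0 : 0 <= S by apply: sumr_ge0 => F _; apply: sumr_ge0.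
have T0 : (0 : R) < t%:~R by rewrite ltr0z.
exists (1 + S)^-1; split; first by rewrite invr_gt0; lra.
move=> y' Hy'; exists ((t%:~R)^-1 *: y'); split; last first.
  by rewrite scalerA mulfV ?scale1r // gt_eqF.
apply/HP => F HF; rewrite linZ.
set sF := \sum_i `|(F.1 0 i)%:~R : R|.
have sFS : sF <= S.
  apply: (@sum_seq_ge _ _ Fs (fun G : 'rV[int]_d * int => \sum_i `|(G.1 0 i)%:~R : R|) F) => // G.
  by apply: sumr_ge0.
have hd : - (sF * (1 + S)^-1) <= lin F.1 (y' - lat R y).
  rewrite /lin mulr_suml -sumrN; apply: ler_sum => i _.
  rewrite !mxE; set u := (F.1 0 i)%:~R; set v := (y' 0 i - _).
  have : `|u * v| <= `|u| * (1 + S)^-1.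
    by rewrite normrM; apply: ler_wpM2l => //; apply: ltW; have := Hy' i; rewrite mxE.
  rewrite ler_norml => /andP[] //.
have hlt : sF * (1 + S)^-1 < 1.
  rewrite ltr_pdivrMr; last lra.
  lra.
have hy := H F HF.
have hl : lin F.1 y' = lin F.1 (lat R y) + lin F.1 (y' - lat R y).
  by rewrite -linD addrC subrK.
have : (- (t * F.2) + 1)%:~R <= lin F.1 (lat R y) by rewrite lin_lat ler_int.
rewrite rmorphD rmorphN rmorphM /= => hb.
have hL : - (t%:~R * F.2%:~R) <= lin F.1 y' by lra.
have -> : - (F.2%:~R : R) = (t%:~R)^-1 * (- (t%:~R * F.2%:~R)).
  by rewrite mulrN mulrA mulVf ?mul1r // gt_eqF.
by apply: ler_wpM2l => //; rewrite invr_ge0 ltW.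
Qed.

End Poly.
Lemma bezout_row d (n : 'rV[int]_d) : primitive n -> exists w, ilin n w = 1.
Proof.
move=> Hp; case: (int_Smith_normal_form n) => L Lu [Rm Ru [s _ E]].
pose u : 'rV[int]_d := \row_j ((j == 0 :> nat)%:R).
pose c := L 0 0 * s`_0.
have En : n = c *: (u *m Rm).
  rewrite E scalemxAl; congr (_ *m _); apply/matrixP => i j.
  rewrite ord1 !mxE big_ord1 !mxE /= /c eq_sym.
  by case: (_ == _); rewrite ?mulr1n ?mulr0n ?mulr1 ?mulr0.
have c1 : `|c| = 1 := Hp c _ En.
have [j0 _] := nz_exists (prim_nz Hp).
have dpos : (0 < d)%N by apply: leq_ltn_trans (leq0n j0) (ltn_ord j0).
have uu : (u *m u^T) 0 0 = 1.
  rewrite mxE (bigD1 (Ordinal dpos)) //= big1 ?addr0 => [|j hj]; rewrite !mxE //=.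
  have : (j : nat) != 0%N by apply: contra hj => /eqP h; apply/eqP/val_inj.
  by move/negbTE => ->; rewrite mul0r.
pose w := (invmx Rm *m u^T)^T.
have hw : ilin n w = c.
  have -> : ilin n w = (n *m w^T) 0 0.
    by rewrite /ilin mxE; apply: eq_bigr => i _; rewrite !mxE.
  rewrite trmxK En -scalemxAl mxE -mulmxA (mulmxA Rm) mulmxV // mul1mx uu mulr1 //.
exists (c *: w); rewrite ilinZ hw.
have : c = 1 \/ c = -1 by lia.
by case=> ->.
Qed.
Lemma conv_lat (R : realType) d (V : seq 'rV[int]_d) (x : 'rV[R]_d) :
  conv (fun y => exists2 v, v \in V & y = lat R v) x ->
  exists m (vv : 'I_m -> 'rV[int]_d) (l : 'I_m -> R),
    (forall i, vv i \in V) /\ (forall i, 0 <= l i) /\ \sum_i l i = 1 /\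
    x = \sum_i l i *: lat R (vv i).
Proof.
case=> m [p [l [Sp [l0 [l1 ->]]]]].
have [vv Hv] : exists vv : 'I_m -> 'rV[int]_d, forall i, vv i \in V /\ p i = lat R (vv i).
  apply: (@fin_all_exists _ (fun _ => 'rV[int]_d) (fun i v => v \in V /\ p i = lat R v)) => i; have [v ? ?] := Sp i; by exists v.
exists m, vv, l; split; first by move=> i; case: (Hv i).
do 2!split => //; apply: eq_bigr => i _; by case: (Hv i) => _ ->.
Qed.

Section Level.
Variables (R : realType) (d : nat).
Local Notation pt := 'rV[R]_d.
Variables (P : pt -> Prop) (Fs : seq ('rV[int]_d * int)) (V : seq 'rV[int]_d) (x0 : pt).
Hypothesis HP : forall x, P x <-> (forall F, F \in Fs -> lin F.1 x >= - (F.2%:~R)).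
Hypothesis Hprim : forall F, F \in Fs -> primitive F.1.
Hypothesis Hirr : forall F, F \in Fs -> exists x : pt,
       lin F.1 x < - (F.2%:~R) /\
       (forall G, G \in Fs -> G != F -> lin G.1 x >= - (G.2%:~R)).
Hypothesis HV : forall x, P x <-> conv (fun y => exists2 v, v \in V & y = lat R v) x.
Hypothesis Hx0 : interior P x0.

Lemma V_in_P v : v \in V -> P (lat R v).
Proof.
move=> Vv; apply/HV; exists 1%N, (fun _ => lat R v), (fun _ => 1).
split; first by move=> _; exists v.
split; first by move=> _; apply: ler01.
by split; rewrite big_ord1 ?scale1r.
Qed.

Lemma P_int_lb v G : P (lat R v) -> G \in Fs -> 0 <= ilin G.1 v + G.2.
Proof.
move=> Pv HG; have := proj1 (HP _) Pv G HG.
rewrite lin_lat -rmorphN ler_int => h; lia.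
Qed.

Lemma level_one F : F \in Fs -> exists y (t : int), 0 < t /\
  ilin F.1 y = - (t * F.2) + 1 /\
  forall G, G \in Fs -> - (t * G.2) + 1 <= ilin G.1 y.
Proof.
move=> HF; have [xF [xFlt xFG]] := Hirr HF.
have x0s G : G \in Fs -> - G.2%:~R < lin G.1 x0.
  move=> HG; apply: (@interior_strict _ _ P _ _ _ (prim_nz (Hprim HG))) => // y Py.
  exact: (proj1 (HP y)) Py G HG.
have alp : 0 < lin F.1 x0 + F.2%:~R by have := x0s F HF; lra.
have bep : 0 < - F.2%:~R - lin F.1 xF by lra.
set al := lin F.1 x0 + F.2%:~R in alp; set be := - F.2%:~R - lin F.1 xF in bep.
have hne : al + be != 0 by rewrite gt_eqF //; lra.
set q := (be / (al + be)) *: x0 + (al / (al + be)) *: xF.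
have linq G : lin G.1 q = be / (al + be) * lin G.1 x0 + al / (al + be) * lin G.1 xF.
  by rewrite linD !linZ.
have c1p : 0 < be / (al + be) by rewrite divr_gt0 //; lra.
have c2p : 0 < al / (al + be) by rewrite divr_gt0 //; lra.
have c12 : be / (al + be) + al / (al + be) = 1 by rewrite -mulrDl addrC mulfV.
have qF : lin F.1 q = - F.2%:~R.
  rewrite linq /al /be; field.
  by move: hne; rewrite /al /be.
have qG G : G \in Fs -> G != F -> - G.2%:~R < lin G.1 q.
  move=> HG HGF; rewrite linq; have := x0s G HG; have := xFG G HG HGF.
  set c1 := be / (al + be) in c1p c12 *; set c2 := al / (al + be) in c2p c12 *.
  move=> h1 h2; nra.
have Pq : P q.
  apply/HP => G HG; case: (G =P F) => [->|/eqP ne]; first by rewrite qF.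
  exact/ltW/qG.
have [m [vv [l [Vv [l0 [l1 qE]]]]]] := conv_lat (proj1 (HV q) Pq).
have a0 G i : G \in Fs -> 0 <= ilin G.1 (vv i) + G.2.
  by move=> HG; apply: P_int_lb => //; apply: V_in_P.
have sumG G : lin G.1 q + G.2%:~R = \sum_i l i * (ilin G.1 (vv i) + G.2)%:~R.
  have -> : (G.2%:~R : R) = \sum_i l i * G.2%:~R by rewrite -mulr_suml l1 mul1r.
  rewrite qE lin_sum -big_split; apply: eq_bigr => i _.
  by rewrite lin_lat rmorphD mulrDr.
have zeroF i : 0 < l i -> ilin F.1 (vv i) + F.2 = 0.
  move=> li; have := sumG F; rewrite qF addNr => /esym H0.
  have hnn : forall j, xpredT j -> 0 <= l j * (ilin F.1 (vv j) + F.2)%:~R.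
    by move=> j _; rewrite mulr_ge0 // ler0z; apply: a0.
  have := @psumr_eq0P _ _ xpredT (fun i => l i * (ilin F.1 (vv i) + F.2)%:~R) hnn H0 i isT.
  by move/eqP; rewrite mulf_eq0 intr_eq0 gt_eqF //= => /eqP.
have posG G : G \in Fs -> G != F -> exists i, 0 < l i /\ 1 <= ilin G.1 (vv i) + G.2.
  move=> HG HGF.
  have [i /andP[li ai] | none] := pickP (fun i => (0 < l i) && (0 < ilin G.1 (vv i) + G.2)).
    by exists i; split => //; lia.
  exfalso; have : lin G.1 q + G.2%:~R = 0.
    rewrite sumG big1 // => i _; have := none i; have := l0 i.
    rewrite le_eqVlt => /orP[/eqP <-|li]; first by rewrite mul0r.
    rewrite li /= => /negbT; rewrite -leNgt => hle.
    have -> : ilin G.1 (vv i) + G.2 = 0. have := a0 G i HG. by move=> h; apply/eqP; rewrite eq_le hle h.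
    by rewrite mulr0.
  have := qG G HG HGF; lra.
have [i0 li0] : exists i0, 0 < l i0.
  have [i li | none] := pickP (fun i => 0 < l i); first by exists i.
  exfalso; move: l1; rewrite big1 => [|i _]; first by move/eqP; rewrite eq_sym oner_eq0.
  by apply/eqP; rewrite eq_le l0 andbT leNgt none.
pose u := \sum_(i | 0 < l i) vv i.
pose kk : int := \sum_(i | 0 < l i) 1.
have uG G : ilin G.1 u + kk * G.2 = \sum_(i | 0 < l i) (ilin G.1 (vv i) + G.2).
  rewrite ilin_sum big_split /= mulr_suml; congr (_ + _).
  by apply: eq_bigr => i _; rewrite mul1r.
have kk1 : 1 <= kk by rewrite /kk (bigD1 i0) //= lerDl sumr_ge0.
have uF : ilin F.1 u + kk * F.2 = 0 by rewrite uG big1 // => i li; apply: zeroF.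
have uG1 G : G \in Fs -> G != F -> 1 <= ilin G.1 u + kk * G.2.
  move=> HG HGF; have [i [li ai]] := posG G HG HGF.
  rewrite uG (bigD1 i) //=; have : 0 <= \sum_(j | (0 < l j) && (j != i)) (ilin G.1 (vv j) + G.2).
    by apply: sumr_ge0 => j _; apply: a0.
  by move=> h; rewrite (le_trans ai) // lerDl.
have [w0 hw0] := bezout_row (Hprim HF).
pose M : int := 1 + \sum_(G <- Fs) `|ilin G.1 w0|.
have hM G : G \in Fs -> 1 + `|ilin G.1 w0| <= M.
  move=> HG; rewrite /M lerD2l.
  by apply: (@sum_seq_ge _ _ Fs (fun G : 'rV[int]_d * int => `|ilin G.1 w0|)).
have M1 : 1 <= M by have := hM F HF; have := normr_ge0 (ilin F.1 w0); lia.
exists (M *: u + w0), (M * kk); split; first by nia.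
split.
  rewrite ilinD ilinZ hw0.
  have -> : ilin F.1 u = - (kk * F.2) by lia.
  by rewrite mulrN mulrA.
move=> G HG; rewrite ilinD ilinZ.
case: (G =P F) => [->|/eqP ne].
  have -> : ilin F.1 u = - (kk * F.2) by lia.
  by rewrite hw0 mulrN mulrA.
have h1 := uG1 G HG ne.
have h2 : M * 1 <= M * (ilin G.1 u + kk * G.2) by apply: ler_wpM2l => //; lia.
have h3 := hM G HG.
have h4 : - `|ilin G.1 w0| <= ilin G.1 w0 by rewrite lerNnormlW.
move: h2; rewrite mulr1 mulrDr mulrA => h2.
lia.
Qed.

End Level.
Lemma interior_self (R : realType) d (S : 'rV[R]_d -> Prop) x : interior S x -> S x.
Proof. by case=> e [e0 H]; apply: H => i; rewrite subrr normr0. Qed.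

Section Alg.
Variables (k : fieldType) (d : nat) (R : realType) (P : 'rV[R]_d -> Prop).
Local Notation L := (laurent k d).
Local Notation K := (key d).

Lemma fglift0 (M : lmodType k) (h : K -> M) : fglift h (0 : L) = 0.
Proof. by have := lift_is_additive h 0 0; rewrite subrr => ->; rewrite subrr. Qed.

Lemma fgliftD (M : lmodType k) (h : K -> M) (f g : L) :
  fglift h (f + g) = fglift h f + fglift h g.
Proof.
have A := lift_is_additive h.
have N y : fglift h (- y) = - fglift h y.
  by rewrite -sub0r A fglift0 sub0r.
by have := A f (- g); rewrite opprK => ->; rewrite N opprK.
Qed.

Lemma fglift_sumE (M : lmodType k) (h : K -> M) (g : L) :
  fglift h g = \sum_(z <- dom g) coeff z g *: h z.
Proof.
rewrite -{1}(freeg_sumE g) (big_morph (fglift h) (fgliftD h) (fglift0 h)).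
by apply: eq_bigr => z _; rewrite liftU.
Qed.

Lemma lmulU (E : K) (g : L) :
  lmul << E >> g = fglift (fun b : K => << (E.1 + b.1, E.2 + b.2) >> : L) g.
Proof. by rewrite /lmul liftU scale1r. Qed.

Lemma lmulUU (a b : K) : lmul << a >> << b >> = << (a.1 + b.1, a.2 + b.2) >> :> L.
Proof. by rewrite lmulU liftU scale1r. Qed.

Lemma coeff_lmulU (E : K) (g : L) (c : K) :
  coeff (c.1 + E.1, c.2 + E.2) (lmul << E >> g) = coeff c g.
Proof.
rewrite lmulU fglift_sumE -[in RHS](freeg_sumE g).
rewrite (big_morph _ (coeffD (c.1 + E.1, c.2 + E.2)) (coeff0 k _)).
rewrite (big_morph _ (coeffD c) (coeff0 k _)).
apply: eq_bigr => z _; rewrite coeffZ !coeffU mul1r.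
congr (_ * _%:R).
case: z c E => [z1 z2] [c1 c2] [e1 e2] /=.
by rewrite !xpair_eqE (addrC c1 e1) (addrC c2 e2) !(inj_eq (addrI _)).
Qed.

Lemma scaleU (c : k) (z : K) : c *: (<< z >> : L) = << c *g z >>.
Proof. by apply/eqP/freeg_eqP => x; rewrite coeffZ !coeffU mul1r. Qed.

Lemma lmul_const (c : k) (g : L) : lmul << c *g ((0 : 'rV[int]_d), (0 : int)) >> g = c *: g.
Proof.
rewrite /lmul liftU fglift_sumE; congr (_ *: _).
rewrite -[in RHS](freeg_sumE g); apply: eq_bigr => -[z1 z2] _.
by rewrite /= !add0r scaleU.
Qed.

Lemma dom_U_sub (c : k) (z : K) : {subset dom (<< c *g z >> : L) <= [:: z]}.
Proof.
have [->|nz] := eqVneq c 0; first by rewrite freegU0 dom0.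
by rewrite domU.
Qed.

Definition cond (e : K) := 0 < e.2 /\ interior (dil e.2%:~R P) (lat R e.1).

Lemma canon_U (c : k) (z : K) : cond z -> in_canonical P << c *g z >>.
Proof. by move=> cz e /dom_U_sub; rewrite inE => /eqP ->. Qed.

Lemma canon_add (f g : L) : in_canonical P f -> in_canonical P g -> in_canonical P (f + g).
Proof. by move=> hf hg e /domD_subset; rewrite mem_cat => /orP[/hf|/hg]. Qed.

Lemma ehr_of_canon (f : L) : in_canonical P f -> in_ehrhart P f.
Proof.
move=> hf e /hf [e0 hi]; split; first exact: ltW.
exact: interior_self.
Qed.

Variable x0 : 'rV[R]_d.
Hypothesis Px0 : P x0.

Lemma ehr_const (c : k) : in_ehrhart P << c *g ((0 : 'rV[int]_d), (0 : int)) >>.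
Proof.
move=> e /dom_U_sub; rewrite inE => /eqP ->; split; first by [].
exists x0; split => //; rewrite scale0r; apply/matrixP => i j; rewrite !mxE //.
Qed.

Lemma phi_decomp (phi : L -> L) (w : L) : is_hom_canonical P phi -> in_canonical P w ->
  phi w = \sum_(z <- dom w) coeff z w *: phi << z >>.
Proof.
move=> [Hc [Hadd Hlin]] hw.
have c0 : in_canonical P (0 : L) by move=> e; rewrite dom0.
have phi0 : phi 0 = 0.
  have := Hadd 0 0 c0 c0; rewrite addr0 => /(congr1 (fun x => x - phi 0)).
  by rewrite subrr addrK => <-.
have phiU c z : cond z -> phi << c *g z >> = c *: phi << z >>.
  move=> cz; rewrite -(scaleU c z) -lmul_const Hlin //; last exact: canon_U.
  by rewrite lmul_const.
  exact: ehr_const.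
suff H : forall s, {subset s <= dom w} ->
   in_canonical P (\sum_(z <- s) << coeff z w *g z >>) /\
   phi (\sum_(z <- s) << coeff z w *g z >>) = \sum_(z <- s) coeff z w *: phi << z >>.
  by rewrite -{1}(freeg_sumE w); case: (H (dom w) (fun z h => h)).
elim => [|z s IH] hs; first by rewrite !big_nil.
have [cs ps] : in_canonical P (\sum_(z <- s) << coeff z w *g z >>) /\
   phi (\sum_(z <- s) << coeff z w *g z >>) = \sum_(z <- s) coeff z w *: phi << z >>.
  by apply: IH => y ys; apply: hs; rewrite inE ys orbT.
have cz : cond z by apply: hw; apply: hs; rewrite inE eqxx.
rewrite !big_cons; split; first by apply: canon_add => //; apply: canon_U.
by rewrite (Hadd _ _ (canon_U (c:=coeff z w) cz) cs) ps (phiU _ _ cz).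
Qed.

End Alg.
Lemma extract (k : fieldType) (R : realType) d (P : 'rV[R]_d -> Prop) (x0 : 'rV[R]_d)
  (x : 'rV[int]_d) :
  P x0 -> nearly_gorenstein k P -> P (lat R x) ->
  exists (z : 'rV[int]_d) (j : int), 0 < j /\ interior (dil j%:~R P) (lat R z) /\
   forall E : key d, 0 < E.2 -> interior (dil E.2%:~R P) (lat R E.1) ->
     0 <= 1 + E.2 - j /\ dil (1 + E.2 - j)%:~R P (lat R (x + E.1 - z)).
Proof.
move=> Px0 NG Px.
pose X : key d := (x, 1).
have mf : in_maxideal P (<< X >> : laurent k d).
  split => e; rewrite domU1 inE => /eqP ->; last by [].
  split; first by [].
  by exists (lat R x); split => //; rewrite scale1r.
have [n [phi [w [Hw Hf]]]] := NG _ mf.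
have c1 : coeff X (<< X >> : laurent k d) = 1 by rewrite coeffU eqxx mulr1.
have [i ni] : exists i, coeff X (phi i (w i)) != 0.
  have [i h | none] := pickP (fun i => coeff X (phi i (w i)) != 0); first by exists i.
  exfalso; move: c1; rewrite Hf (big_morph _ (coeffD X) (coeff0 k _)) big1 => [|j _].
    by move/eqP; rewrite eq_sym oner_eq0.
  by have := none j; move/negbFE/eqP.
have [Hhom Hcan] := Hw i.
have [z zin nz] : exists2 z, z \in dom (w i) & coeff X (phi i << z >>) != 0.
  case: (boolP (has (fun z => coeff X (phi i << z >>) != 0) (dom (w i)))) => [/hasP [z ? ?]|/hasPn none].
    by exists z.
  exfalso; move: ni; rewrite (phi_decomp Px0 Hhom Hcan) (big_morph _ (coeffD X) (coeff0 k _)).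
  rewrite big_seq big1 ?eqxx // => y yin.
  by rewrite coeffZ; have := none y yin; rewrite negbK => /eqP ->; rewrite mulr0.
have [zj ziN] := Hcan z zin.
exists z.1, z.2; split => //; split => //.
move=> E E0 EI.
have cE : in_canonical P (<< E >> : laurent k d) := canon_U (c:=1) (conj E0 EI).
have cz : in_canonical P (<< z >> : laurent k d) := canon_U (c:=1) (conj zj ziN).
case: Hhom => [Hc [Hadd Hlin]].
have eq1 : lmul << E >> (phi i << z >>) = lmul << z >> (phi i << E >>).
  rewrite -(Hlin _ _ (ehr_of_canon cE) cz) -(Hlin _ _ (ehr_of_canon cz) cE) !lmulUU.
  by rewrite (addrC E.1) (addrC E.2).
pose c : key d := (x + E.1 - z.1, 1 + E.2 - z.2).
have hc : coeff c (phi i << E >>) != 0.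
  have := coeff_lmulU z (phi i << E >>) c; rewrite -eq1.
  have -> : (c.1 + z.1, c.2 + z.2) = (X.1 + E.1, X.2 + E.2) by rewrite /c /= !subrK.
  by rewrite coeff_lmulU => <-.
have := Hc _ cE c; rewrite mem_dom => /(_ hc).
by [].
Qed.
Lemma decomp (k : fieldType) (R : realType) (d : nat)
    (P : 'rV[R]_d -> Prop) (Fs : seq ('rV[int]_d * int)) (a : nat)
    (V : seq 'rV[int]_d) (x0 : 'rV[R]_d) :
  (forall x, P x <-> (forall F, F \in Fs -> lin F.1 x >= - (F.2%:~R))) ->
  (forall F, F \in Fs -> primitive F.1) ->
  (forall F, F \in Fs -> exists x : 'rV[R]_d,
       lin F.1 x < - (F.2%:~R) /\
       (forall G, G \in Fs -> G != F -> lin G.1 x >= - (G.2%:~R))) ->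
  (forall x, P x <-> conv (fun y => exists2 v, v \in V & y = lat R v) x) ->
  interior P x0 ->
  is_codegree P a -> nearly_gorenstein k P ->
  forall v, P (lat R v) -> exists y r : 'rV[int]_d,
    interior (dil a%:R P) (lat R y) /\
    (forall F, F \in Fs -> lin F.1 (lat R r) >= ((a%:Z - 1) * F.2 - 1)%:~R) /\
    v = y + r.
Proof.
move=> HP Hprim Hirr HV Hx0 [a1 [[za Hza] Hcod]] NG v Pv.
have Px0 := interior_self Hx0.
have [z [j [j0 [zI Hall]]]] := extract Px0 NG Pv.
have ja : a%:Z <= j.
  case: j j0 zI Hall => // jn j0 zI Hall; rewrite lez_nat leqNgt; apply/negP => ltj.
  apply: (Hcod jn); last by exists z.
  by rewrite ltj andbT; move: j0; rewrite ltz_nat.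
have a0 : 0 < a%:Z by rewrite ltz_nat.
have aI : interior (dil (a%:Z)%:~R P) (lat R za) := Hza.
have [ha1 ha2] := Hall (za, a%:Z) a0 aI.
move: ha1 ha2 => /= ha1 ha2.
have B F : F \in Fs -> (j - 1) * F.2 - 1 <= ilin F.1 v - ilin F.1 z.
  move=> HF; have [yF [tF [t0 [hF hG]]]] := level_one HP Hprim Hirr HV Hx0 HF.
  have EI := interior_of_lb HP t0 hG.
  have [h1 h2] := Hall (yF, tF) t0 EI.
  move: h1 h2 => /= h1 h2.
  have h1' : (0 : R) <= (1 + tF - j)%:~R by rewrite ler0z.
  have := dil_lb HP h1' h2 HF.
  rewrite lin_lat -rmorphM -rmorphN ler_int !ilinD ilinN hF => h.
  rewrite -subr_ge0; have -> : ilin F.1 v - ilin F.1 z - ((j - 1) * F.2 - 1) =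
    (ilin F.1 v + (- (tF * F.2) + 1) - ilin F.1 z) - (- ((1 + tF - j) * F.2)) by ring.
  by rewrite subr_ge0.
have [ja'|ja'] : j = a%:Z \/ j = a%:Z + 1 by lia.
  exists z, (v - z); split; first by rewrite ja' in zI; exact: zI.
  split; last by rewrite addrC subrK.
  move=> F HF; rewrite lin_lat ler_int ilinD ilinN; by have := B F HF; rewrite ja'.
exists za, (v - za); split; first exact: Hza.
split; last by rewrite addrC subrK.
have h0 F : F \in Fs -> ilin F.1 v + ilin F.1 za - ilin F.1 z = 0.
  move=> HF; case: ha2 => x' [_ Hx'].
  have e0 : 1 + a%:Z - j = 0 by lia.
  have : lin F.1 (lat R (v + za - z)) = 0.
    rewrite Hx' linZ; have -> : ((1 + a%:Z - j)%:~R : R) = 0 by rewrite e0.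
    by rewrite mul0r.
  by rewrite lin_lat !ilinD ilinN => /eqP; rewrite intr_eq0 => /eqP.
move=> F HF; rewrite lin_lat ler_int ilinD ilinN.
have hB := B F HF; have h0' := h0 F HF; have hP := P_int_lb HP Pv HF.
rewrite ja' in hB; rewrite -subr_ge0.
have -> : ilin F.1 v - ilin F.1 za - ((a%:Z - 1) * F.2 - 1) =
  (ilin F.1 v + F.2) + ((ilin F.1 v - ilin F.1 z) - ((a%:Z + 1 - 1) * F.2 - 1))
  - (ilin F.1 v + ilin F.1 za - ilin F.1 z) by ring.
by rewrite h0' subr0 addr_ge0 // subr_ge0.
Qed.
Unset Implicit Arguments.
Set Strict Implicit.
Theorem proposition3p5 (k : fieldType) (R : realType) (d : nat)
    (P : 'rV[R]_d -> Prop) (Fs : seq ('rV[int]_d * int)) (a : nat) :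
  infinite_field k ->
  lattice_polytope P ->
  full_dimensional P ->
  facet_presentation P Fs ->
  is_codegree P a ->
  nearly_gorenstein k P ->
  forall x : 'rV[R]_d,
    P x <-> mink (floor_poly (dil a%:R P)) (remainder_poly Fs a) x.
Proof.
move=> _ [V HV] [x0 Hx0] [HP [Hprim Hirr]] Hcod NG x.
split.
  move=> Px; have [m [vv [l [Vv [l0 [l1 ->]]]]]] := conv_lat (proj1 (HV x) Px).
  have [f Hf] : exists f : 'I_m -> 'rV[int]_d * 'rV[int]_d, forall i,
      interior (dil a%:R P) (lat R (f i).1) /\
      (forall F, F \in Fs -> lin F.1 (lat R (f i).2) >= ((a%:Z - 1) * F.2 - 1)%:~R) /\
      vv i = (f i).1 + (f i).2.
    apply: (@fin_all_exists _ (fun _ => ('rV[int]_d * 'rV[int]_d)%type)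
      (fun i yr => interior (dil a%:R P) (lat R yr.1) /\
      (forall F, F \in Fs -> lin F.1 (lat R yr.2) >= ((a%:Z - 1) * F.2 - 1)%:~R) /\
      vv i = yr.1 + yr.2)) => i.
    have [y [r H]] := decomp HP Hprim Hirr HV Hx0 Hcod NG (V_in_P HV (Vv i)).
    by exists (y, r).
  exists (\sum_i l i *: lat R (f i).1), (\sum_i l i *: lat R (f i).2).
  split.
    exists m, (fun i => lat R (f i).1), l; split; last by [].
    by move=> i; exists (f i).1; split => //; case: (Hf i).
  split.
    exists m, (fun i => lat R (f i).2), l; split; last by [].
    by move=> i; exists (f i).2; split => //; case: (Hf i) => _ [].
  rewrite -big_split; apply: eq_bigr => i _; case: (Hf i) => _ [_ ->].
  by rewrite latD scalerDr.
case=> y [r [Hy [Hr ->]]]; apply/HP => F HF.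
have hy : ((- (a%:Z * F.2) + 1)%:~R : R) <= lin F.1 y.
  apply: (conv_lb Hy) => p [z [Hz ->]]; rewrite lin_lat ler_int.
  by apply: (int_lb HP Hprim (t:=a%:Z)) => //.
have hr : (((a%:Z - 1) * F.2 - 1)%:~R : R) <= lin F.1 r.
  by apply: (conv_lb Hr) => p [z [-> Hz]]; exact: Hz F HF.
have := lerD hy hr; rewrite -rmorphD.
have -> : (- (a%:Z * F.2) + 1) + ((a%:Z - 1) * F.2 - 1) = - F.2 by ring.
by rewrite rmorphN linD.
Qed.
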